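(* Assume $\sigma_1(x)=\tfrac12\sigma_1''(0)(x-a_1)(x-b_1)$ with $\sigma_1''(0)\ne0$ and real $a_1<0<b_1$, and that $(1-q^{-1})\tau'(0)=-\tfrac12\sigma_1''(0)$ and $(1-q^{-1})\tau(0)=\tfrac12\sigma_1''(0)(a_1+b_1)$, so that $\sigma_2(x)\equiv q\tfrac12\sigma_1''(0)a_1b_1$ is a nonzero constant. Put $a=a_1$, $b=b_1$ and $$\rho(x)=(qx/a,\,qx/b;q)_\infty.$$ Then there exist polynomials $P_n$, $n\in\mathbb{N}_0$, with $P_n$ of degree $n$ a solution of the q-EHT with $\lambda=\lambda_n$, and nonzero constants $d_n^2$, such that for all $m,n\in\mathbb{N}_0$ $$\int_a^bP_n(x)P_m(x)\rho(x)\,d_qx=d_n^2\delta_{mn},$$ i.e. orthogonality with respect to $\rho$ supported on $\{q^ka\}_{k\in\mathbb{N}_0}\cup\{q^kb\}_{k\in\mathbb{N}_0}$.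
   Context: Throughout $0<q<1$. For a function $y$ and $\zeta\in\{q,q^{-1}\}$, $D_\zeta y(x)=\frac{y(x)-y(\zeta x)}{(1-\zeta)x}$ for $x\ne0$ and $D_\zeta y(0)=y'(0)$; $[n]_q=\frac{1-q^n}{1-q}$. Let $\sigma_1$ be a real polynomial of degree at most two, $\tau(x)=\tau'(0)x+\tau(0)$ a real polynomial with $\tau'(0)\ne0$, and $\sigma_2(x):=q[\sigma_1(x)+(1-q^{-1})x\tau(x)]$. The q-EHT with parameter $n$ is $\sigma_1(x)D_{q^{-1}}D_qy(x)+\tau(x)D_qy(x)+\lambda_ny(x)=0$, $\lambda_n=-[n]_q\big(\tau'(0)+\tfrac12[n-1]_{q^{-1}}\sigma_1''(0)\big)$. $(\beta;q)_\infty=\prod_{k\ge0}(1-\beta q^k)$, $(\beta_1,\beta_2;q)_\infty=(\beta_1;q)_\infty(\beta_2;q)_\infty$. For $a<0<b$, $\int_a^b f(x)\,d_qx=(1-q)b\sum_{j\ge0}q^jf(q^jb)+(1-q)(-a)\sum_{j\ge0}q^jf(q^ja)$. *)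

(* Defs.v *)
From Stdlib Require Import Reals Lra.
From Coquelicot Require Import Coquelicot.
Open Scope R_scope.

Definition qD (zeta : R) (y : R -> R) (x : R) : R :=
  if Req_EM_T x 0 then Derive y 0
  else (y x - y (zeta * x)) / ((1 - zeta) * x).

Definition qnum (q : R) (n : Z) : R := (1 - powerRZ q n) / (1 - q).

Definition qpoch_inf (beta q : R) : R :=
  real (Lim_seq (fun N => prod_f_R0 (fun k => 1 - beta * q ^ k) N)).

(* Jackson q-integral from a < 0 to b > 0 *)
Definition qint (q a b : R) (f : R -> R) : R :=
  (1 - q) * b * Series (fun j => q ^ j * f (q ^ j * b))
  + (1 - q) * (- a) * Series (fun j => q ^ j * f (q ^ j * a)).

Definition qintegrable (q a b : R) (f : R -> R) : Prop :=
  ex_series (fun j => q ^ j * f (q ^ j * b)) /\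
  ex_series (fun j => q ^ j * f (q ^ j * a)).

Definition is_poly_deg (P : R -> R) (n : nat) : Prop :=
  exists c : nat -> R, c n <> 0 /\
    forall x, P x = sum_f_R0 (fun k => c k * x ^ k) n.

Definition lambda_n (q t1 s : R) (n : nat) : R :=
  - qnum q (Z.of_nat n) * (t1 + / 2 * qnum (/ q) (Z.of_nat n - 1) * s).

Definition solves_qEHT (q : R) (sigma1 tau : R -> R) (lam : R) (y : R -> R) : Prop :=
  forall x, sigma1 x * qD (/ q) (qD q y) x + tau x * qD q y x + lam * y x = 0.

(* Main.v *)
Require Import Defs.
From Stdlib Require Import Reals Lra Lia Classical.
From Coquelicot Require Import Coquelicot.
Open Scope R_scope.

Lemma pow_le_1 (q : R) n : 0 <= q <= 1 -> 0 <= q ^ n <= 1.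
Proof. intro H; induction n; simpl; nra. Qed.

Definition pp (t q : R) (N : nat) : R := prod_f_R0 (fun k => 1 - t * q ^ k) N.

Lemma prod_ext (f g : nat -> R) N : (forall k, f k = g k) -> prod_f_R0 f N = prod_f_R0 g N.
Proof. intro H; induction N; simpl; rewrite ?IHN, ?H; reflexivity. Qed.

Lemma prod_peel (f : nat -> R) N :
  prod_f_R0 f (S N) = f 0%nat * prod_f_R0 (fun k => f (S k)) N.
Proof.
  induction N as [|N IH].
  - simpl. ring.
  - change (prod_f_R0 f (S (S N))) with (prod_f_R0 f (S N) * f (S (S N))).
    rewrite IH. simpl. ring.
Qed.

Lemma real_mult (c : R) (l : Rbar) : real (Rbar_mult c l) = c * real l.
Proof.
  destruct l as [l| |]; simpl; try ring;
  unfold Rbar_mult, Rbar_mult'; 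
  repeat (first [destruct Rle_dec | destruct Rle_lt_or_eq_dec]); simpl; ring.
Qed.

Lemma Q_fe t q : qpoch_inf t q = (1 - t) * qpoch_inf (t * q) q.
Proof.
  unfold qpoch_inf.
  rewrite <- (Lim_seq_incr_1 (fun N => prod_f_R0 (fun k => 1 - t * q ^ k) N)).
  rewrite (Lim_seq_ext _ (fun N => (1 - t) * prod_f_R0 (fun k => 1 - t * q * q ^ k) N)).
  - rewrite Lim_seq_scal_l. apply real_mult.
  - intro N. rewrite prod_peel. simpl. f_equal. ring.
    apply prod_ext. intro k. simpl. ring.
Qed.

Lemma Q_one q : qpoch_inf 1 q = 0.
Proof. rewrite Q_fe. ring. Qed.

Lemma pp_bound t q N : 0 < q < 1 ->
  Rabs (pp t q N - 1) <= exp (Rabs t * (1 - q ^ S N) / (1 - q)) - 1.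
Proof.
  intros [q0 q1]. unfold pp. induction N as [|N IH].
  - simpl. replace (1 - t * 1 - 1) with (- t) by ring. rewrite Rabs_Ropp.
    replace (Rabs t * (1 - q * 1) / (1 - q)) with (Rabs t) by (field; lra).
    pose proof (exp_ineq1_le (Rabs t)). lra.
  - change (prod_f_R0 (fun k => 1 - t * q ^ k) (S N)) with
      (prod_f_R0 (fun k => 1 - t * q ^ k) N * (1 - t * q ^ S N)).
    set (P := prod_f_R0 (fun k => 1 - t * q ^ k) N) in *.
    set (u := t * q ^ S N).
    replace (P * (1 - u) - 1) with ((P - 1) * (1 - u) - u) by ring.
    assert (Hu : Rabs u = Rabs t * q ^ S N).
    { unfold u. rewrite Rabs_mult, (Rabs_right (q ^ S N)). reflexivity.
      apply Rle_ge, pow_le; lra. }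
    set (E := exp (Rabs t * (1 - q ^ S N) / (1 - q))) in *.
    assert (HE : exp (Rabs t * (1 - q ^ S (S N)) / (1 - q)) = E * exp (Rabs u)).
    { unfold E. rewrite <- exp_plus. f_equal. rewrite Hu.
      change (q ^ S (S N)) with (q * q ^ S N). field. lra. }
    rewrite HE.
    pose proof (exp_ineq1_le (Rabs u)).
    assert (E1 : 1 <= E).
    { unfold E. pose proof (exp_ineq1_le (Rabs t * (1 - q ^ S N) / (1 - q))).
      assert (0 <= Rabs t * (1 - q ^ S N) / (1 - q)).
      { apply Rmult_le_pos; [apply Rmult_le_pos|].
        apply Rabs_pos. pose proof (pow_le_1 q (S N)). lra.
        left; apply Rinv_0_lt_compat; lra. }
      lra. }
    eapply Rle_trans. apply Rabs_triang. rewrite Rabs_Ropp, Rabs_mult.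
    assert (Rabs (1 - u) <= 1 + Rabs u).
    { replace (1 - u) with (1 + - u) by ring. eapply Rle_trans. apply Rabs_triang.
      rewrite Rabs_R1, Rabs_Ropp. lra. }
    assert (0 <= Rabs u) by apply Rabs_pos.
    assert (Rabs (P - 1) * Rabs (1 - u) <= (E - 1) * (1 + Rabs u)).
    { apply Rmult_le_compat; try apply Rabs_pos; lra. }
    nra.
Qed.

Lemma exp_le_m x y : x <= y -> exp x <= exp y.
Proof. intro H; destruct (Rle_lt_or_eq_dec _ _ H). left; apply exp_increasing; auto. subst; lra. Qed.

Lemma pp_bound' t q N : 0 < q < 1 -> Rabs (pp t q N - 1) <= exp (Rabs t / (1 - q)) - 1.
Proof.
  intro Hq. eapply Rle_trans. apply pp_bound; auto.
  assert (exp (Rabs t * (1 - q ^ S N) / (1 - q)) <= exp (Rabs t / (1 - q))); [|lra].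
  apply exp_le_m. unfold Rdiv. apply Rmult_le_compat_r. left; apply Rinv_0_lt_compat; lra.
  pose proof (pow_le_1 q (S N)). pose proof (Rabs_pos t). nra.
Qed.

Lemma Q_conv t q : 0 < q < 1 -> t <= 1 ->
  is_lim_seq (pp t q) (qpoch_inf t q) /\ 0 <= qpoch_inf t q /\
  Rabs (qpoch_inf t q - 1) <= exp (Rabs t / (1 - q)) - 1.
Proof.
  intros Hq Ht.
  assert (Hfac : forall k, 0 <= 1 - t * q ^ k).
  { intro k. pose proof (pow_le_1 q k). destruct (Rle_dec t 0); nra. }
  assert (Hpos : forall N, 0 <= pp t q N).
  { intro N; unfold pp; induction N.
    - specialize (Hfac 0%nat); simpl in *; lra.
    - change (prod_f_R0 (fun k => 1 - t * q ^ k) (S N)) with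
      (prod_f_R0 (fun k => 1 - t * q ^ k) N * (1 - t * q ^ S N)).
      apply Rmult_le_pos; auto. }
  assert (Hex : ex_finite_lim_seq (pp t q)).
  { destruct (Rle_dec t 0) as [Hn|Hp].
    - apply (ex_finite_lim_seq_incr _ (exp (Rabs t / (1 - q)))).
      + intro n. unfold pp at 2. simpl. fold (pp t q n).
        pose proof (pow_le_1 q (S n)). pose proof (Hpos n).
        assert (0 <= - t * q ^ S n) by (apply Rmult_le_pos; lra). simpl in *. nra.
      + intro n. pose proof (pp_bound' t q n Hq). apply Rabs_le_between in H. lra.
    - apply (ex_finite_lim_seq_decr _ 0).
      + intro n. unfold pp at 1. simpl. fold (pp t q n).
        pose proof (pow_le_1 q (S n)). pose proof (Hpos n).
        assert (0 <= t * q ^ S n) by (apply Rmult_le_pos; lra). simpl in *. nra.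
      + auto. }
  destruct Hex as [l Hl].
  assert (HQ : qpoch_inf t q = l).
  { unfold qpoch_inf. fold (pp t q). rewrite (is_lim_seq_unique _ _ Hl). reflexivity. }
  rewrite HQ. split; [exact Hl|]. split.
  - apply (is_lim_seq_le (fun _ => 0) (pp t q) 0 l); auto. apply is_lim_seq_const.
  - apply Rabs_le_between. split.
    + assert (Rbar_le (1 - (exp (Rabs t / (1 - q)) - 1)) l).
      { apply (is_lim_seq_le (fun _ => 1 - (exp (Rabs t / (1 - q)) - 1)) (pp t q)); auto. 2: apply is_lim_seq_const.
        intro n. pose proof (pp_bound' t q n Hq). apply Rabs_le_between in H. lra. }
      simpl in H. lra.
    + assert (Rbar_le l (1 + (exp (Rabs t / (1 - q)) - 1))).
      { apply (is_lim_seq_le (pp t q) (fun _ => 1 + (exp (Rabs t / (1 - q)) - 1))); auto. 2: apply is_lim_seq_const.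
        intro n. pose proof (pp_bound' t q n Hq). apply Rabs_le_between in H. lra. }
      simpl in H. lra.
Qed.

Lemma expabs_cont q : continuity_pt (fun x => exp (Rabs x / (1 - q))) 0.
Proof.
  apply (continuity_pt_comp (fun x => Rabs x / (1 - q)) exp).
  - unfold Rdiv. apply continuity_pt_mult. apply Rcontinuity_abs.
    apply continuity_pt_const. intros x y; reflexivity.
  - apply derivable_continuous_pt. apply derivable_pt_exp.
Qed.

Lemma Q_cont q (u : nat -> R) : 0 < q < 1 -> is_lim_seq u 0 ->
  is_lim_seq (fun N => qpoch_inf (u N) q) 1.
Proof.
  intros Hq Hu.
  pose proof (is_lim_seq_continuous _ _ _ (expabs_cont q) Hu) as He.
  simpl in He. rewrite Rabs_R0 in He. replace (0 / (1 - q)) with 0 in He by (field; lra).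
  rewrite exp_0 in He.
  assert (Hev : eventually (fun N => Rabs (u N) < 1)).
  { apply is_lim_seq_spec in Hu. destruct (Hu (mkposreal 1 Rlt_0_1)) as [N HN].
    exists N. intros n Hn. specialize (HN n Hn). simpl in HN. rewrite Rminus_0_r in HN. exact HN. }
  apply (is_lim_seq_le_le_loc (fun N => 1 - (exp (Rabs (u N) / (1 - q)) - 1)) _
                              (fun N => 1 + (exp (Rabs (u N) / (1 - q)) - 1))).
  - destruct Hev as [N HN]. exists N. intros n Hn. specialize (HN n Hn).
    assert (u n <= 1) by (apply Rabs_lt_between in HN; lra).
    destruct (Q_conv (u n) q Hq H) as [_ [_ Hb]]. apply Rabs_le_between in Hb. lra.
  - replace (Finite 1) with (Finite (1 - (1 - 1))) by (f_equal; ring).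
    apply is_lim_seq_minus'. apply is_lim_seq_const.
    apply is_lim_seq_minus'. exact He. apply is_lim_seq_const.
  - replace (Finite 1) with (Finite (1 + (1 - 1))) by (f_equal; ring).
    apply is_lim_seq_plus'. apply is_lim_seq_const.
    apply is_lim_seq_minus'. exact He. apply is_lim_seq_const.
Qed.


Definition ev (c : nat -> R) (N : nat) (x : R) : R := sum_f_R0 (fun k => c k * x ^ k) N.

Lemma ev_S c N x : ev c (S N) x = ev c N x + c (S N) * x ^ S N.
Proof. reflexivity. Qed.

Lemma ev_0 c N : ev c N 0 = c 0%nat.
Proof. induction N. unfold ev; simpl; ring. rewrite ev_S, IHN. simpl. ring. Qed.

Lemma ev_ext c d N x : (forall k, (k <= N)%nat -> c k = d k) -> ev c N x = ev d N x.
Proof.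
  intro H. induction N. unfold ev; simpl; rewrite H; auto; try lia.
  rewrite !ev_S, IHN, H; auto; try (intros; apply H; lia).
Qed.

Lemma ev_pad c N x : c (S N) = 0 -> ev c (S N) x = ev c N x.
Proof. intro H. rewrite ev_S, H. ring. Qed.

Lemma ev_zero c N x : (forall k, (k <= N)%nat -> c k = 0) -> ev c N x = 0.
Proof.
  intro H. induction N. unfold ev; simpl; rewrite H; auto; try ring.
  rewrite ev_S, IHN, H; auto; try ring; try (intros; apply H; lia).
Qed.

Lemma ev_plus c d N x : ev c N x + ev d N x = ev (fun k => c k + d k) N x.
Proof. induction N. unfold ev; simpl; ring. rewrite !ev_S, <- IHN. ring. Qed.

Lemma ev_scal r c N x : r * ev c N x = ev (fun k => r * c k) N x.
Proof. induction N. unfold ev; simpl; ring. rewrite !ev_S, <- IHN. ring. Qed.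

Definition sr (c : nat -> R) (k : nat) : R := match k with 0%nat => 0 | S k => c k end.

Lemma ev_xmul c N x : x * ev c N x = ev (sr c) (S N) x.
Proof. induction N. unfold ev; simpl; ring. rewrite ev_S, (ev_S (sr c)), <- IHN. simpl. ring. Qed.

Lemma ev_lim c N (u : nat -> R) : is_lim_seq u 0 -> is_lim_seq (fun j => ev c N (u j)) (c 0%nat).
Proof.
  intro Hu. induction N.
  - unfold ev; simpl. eapply is_lim_seq_ext. intro; symmetry; apply Rmult_1_r. apply is_lim_seq_const.
  - replace (Finite (c 0%nat)) with (Finite (c 0%nat + c (S N) * 0 ^ S N)) by (simpl; f_equal; ring).
    apply (is_lim_seq_ext (fun j => ev c N (u j) + c (S N) * u j ^ S N)).
    intro; symmetry; apply ev_S.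
    apply is_lim_seq_plus'. exact IHN.
    apply is_lim_seq_mult'. apply is_lim_seq_const.
    apply (is_lim_seq_continuous (fun x => x ^ S N)). apply derivable_continuous_pt, derivable_pt_pow.
    exact Hu.
Qed.

Lemma ev_bound c N x B : Rabs x <= B -> Rabs (ev c N x) <= ev (fun k => Rabs (c k)) N B.
Proof.
  intro H. assert (Hm : forall k, Rabs (c k * x ^ k) <= Rabs (c k) * B ^ k).
  { intro k. rewrite Rabs_mult, <- RPow_abs. apply Rmult_le_compat_l. apply Rabs_pos.
    apply pow_incr. split; auto. apply Rabs_pos. }
  induction N. unfold ev; simpl. apply Hm.
  rewrite !ev_S. eapply Rle_trans. apply Rabs_triang. apply Rplus_le_compat; auto.
Qed.

Definition qn (z : R) (k : nat) : R := qnum z (Z.of_nat k).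

Lemma qn_eq z k : qn z k = (1 - z ^ k) / (1 - z).
Proof. unfold qn, qnum. rewrite <- pow_powerRZ. reflexivity. Qed.

Definition dq (z : R) (c : nat -> R) (k : nat) : R := c (S k) * qn z (S k).

Lemma ev_dq z c N x : z <> 1 -> ev c (S N) x - ev c (S N) (z * x) = (1 - z) * x * ev (dq z c) N x.
Proof.
  intro Hz. assert (Hz' : 1 - z <> 0) by lra.
  induction N.
  - unfold ev, dq; simpl. rewrite qn_eq. simpl. field. auto.
  - rewrite (ev_S c (S N) x), (ev_S c (S N) (z * x)), (ev_S (dq z c) N x).
    replace (ev c (S N) x + c (S (S N)) * x ^ S (S N) -
      (ev c (S N) (z * x) + c (S (S N)) * (z * x) ^ S (S N))) with
      ((ev c (S N) x - ev c (S N) (z * x)) + c (S (S N)) * (x ^ S (S N) - (z * x) ^ S (S N))) by ring.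
    rewrite IHN. unfold dq. rewrite qn_eq. rewrite Rpow_mult_distr. simpl. field. auto.
Qed.

Lemma ev_derive0 c N : is_derive (ev c (S N)) 0 (c 1%nat).
Proof.
  induction N.
  - apply (is_derive_ext (fun x => c 0%nat + c 1%nat * x)).
    intro; unfold ev; simpl; ring.
    auto_derive. auto. ring.
  - apply (is_derive_ext (fun x => ev c (S N) x + c (S (S N)) * x ^ S (S N))).
    intro; symmetry; apply ev_S.
    replace (c 1%nat) with (c 1%nat + 0) by ring.
    apply (is_derive_plus (ev c (S N)) (fun x => c (S (S N)) * x ^ S (S N))). exact IHN.
    auto_derive. auto. simpl. ring.
Qed.

Lemma qD_ev z c N x : z <> 1 -> qD z (ev c (S N)) x = ev (dq z c) N x.
Proof.
  intro Hz. unfold qD. destruct (Req_EM_T x 0) as [H0|H0].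
  - subst. rewrite (is_derive_unique _ _ _ (ev_derive0 c N)). rewrite ev_0. unfold dq.
    rewrite qn_eq. simpl. field. lra.
  - rewrite ev_dq by auto. field. split; auto. lra.
Qed.


Lemma Zsub1 k : (Z.of_nat (S k) - 1)%Z = Z.of_nat k.
Proof. lia. Qed.

Lemma qn_0 z : qn z 0 = 0.
Proof. unfold qn, qnum. simpl. unfold Rdiv. ring. Qed.

Lemma lam_formula q s t1 k : 0 < q < 1 -> (1 - / q) * t1 = - (s / 2) ->
  lambda_n q t1 s k = - (s / 2) * q ^ 2 / (1 - q) ^ 2 * ((/ q) ^ k - 1).
Proof.
  intros Hq h1.
  assert (Hq0 : q <> 0) by lra.
  assert (Hd : 1 - / q <> 0).
  { assert (1 < / q) by (rewrite <- Rinv_1; apply Rinv_lt_contravar; lra). lra. }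
  assert (Ht : t1 = - (s / 2) / (1 - / q)) by (apply (Rmult_eq_reg_l (1 - / q)); [rewrite h1; field; split; [exact Hq0|lra] | exact Hd]).
  unfold lambda_n, qnum. unfold Z.sub.
  rewrite powerRZ_add by (apply Rinv_neq_0_compat; auto).
  rewrite <- !pow_powerRZ.
  assert (Hm : powerRZ (/ q) (- (1)) = q) by (simpl; rewrite Rmult_1_r, Rinv_inv; reflexivity).
  rewrite Hm.
  rewrite Ht. rewrite pow_inv.
  assert (q ^ k <> 0) by (apply pow_nonzero; auto).
  field. repeat split; auto; lra.
Qed.

Lemma lam_inj q s t1 k m : 0 < q < 1 -> s <> 0 -> (1 - / q) * t1 = - (s / 2) ->
  lambda_n q t1 s k = lambda_n q t1 s m -> k = m.
Proof.
  intros Hq hs h1 H. rewrite !lam_formula in H by auto.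
  assert (HC : - (s / 2) * q ^ 2 / (1 - q) ^ 2 <> 0).
  { assert (q ^ 2 <> 0) by (apply pow_nonzero; lra). assert ((1-q)^2 <> 0) by (apply pow_nonzero; lra).
    unfold Rdiv. apply Rmult_integral_contrapositive; split.
    apply Rmult_integral_contrapositive; split; auto. lra. apply Rinv_neq_0_compat; auto. }
  apply Rmult_eq_reg_l in H; auto.
  assert (Hx : 1 < / q). { rewrite <- Rinv_1. apply Rinv_lt_contravar; lra. }
  destruct (Nat.lt_trichotomy k m) as [Hl|[He|Hl]]; auto.
  - pose proof (Rlt_pow _ _ _ Hx Hl). lra.
  - pose proof (Rlt_pow _ _ _ Hx Hl). lra.
Qed.


Definition bet (q s t0 a b : R) (j : nat) : R := qn q j * (t0 - s / 2 * (a + b) * qn (/ q) (pred j)).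
Definition gam (q s a b : R) (j : nat) : R := s / 2 * a * b * qn q j * qn (/ q) (pred j).

Fixpoint gseq (q s t1 t0 a b : R) (n j : nat) : R * R :=
  match j with
  | 0%nat => (1, 0)
  | S j' => let p := gseq q s t1 t0 a b n j' in
      (- (fst p * bet q s t0 a b (n - j') + snd p * gam q s a b (S (n - j')))
         / (lambda_n q t1 s n - lambda_n q t1 s (n - S j')), fst p)
  end.

Definition cf (q s t1 t0 a b : R) (n k : nat) : R :=
  if Nat.leb k n then fst (gseq q s t1 t0 a b n (n - k)) else 0.

Lemma cf_n q s t1 t0 a b n : cf q s t1 t0 a b n n = 1.
Proof. unfold cf. rewrite Nat.leb_refl, Nat.sub_diag. reflexivity. Qed.

Lemma cf_gt q s t1 t0 a b n k : (n < k)%nat -> cf q s t1 t0 a b n k = 0.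
Proof. intro H. unfold cf. destruct (Nat.leb_spec k n); [lia|reflexivity]. Qed.

Lemma cf_snd q s t1 t0 a b n k : (k <= n)%nat ->
  snd (gseq q s t1 t0 a b n (n - k)) = cf q s t1 t0 a b n (S k).
Proof.
  intro H. destruct (Nat.eq_dec k n) as [->|Hne].
  - rewrite Nat.sub_diag, cf_gt by lia. reflexivity.
  - replace (n - k)%nat with (S (n - S k)) by lia. simpl.
    unfold cf. destruct (Nat.leb_spec (S k) n); [reflexivity|lia].
Qed.

Lemma cf_rec q s t1 t0 a b n k : (k < n)%nat ->
  lambda_n q t1 s n <> lambda_n q t1 s k ->
  cf q s t1 t0 a b n k * (lambda_n q t1 s n - lambda_n q t1 s k)
  + cf q s t1 t0 a b n (S k) * bet q s t0 a b (S k)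
  + cf q s t1 t0 a b n (S (S k)) * gam q s a b (S (S k)) = 0.
Proof.
  intros H Hl.
  assert (E1 : cf q s t1 t0 a b n (S k) = fst (gseq q s t1 t0 a b n (n - S k))).
  { unfold cf. destruct (Nat.leb_spec (S k) n); [reflexivity|lia]. }
  assert (E2 : cf q s t1 t0 a b n (S (S k)) = snd (gseq q s t1 t0 a b n (n - S k))).
  { rewrite cf_snd by lia. reflexivity. }
  assert (E0 : cf q s t1 t0 a b n k = fst (gseq q s t1 t0 a b n (S (n - S k)))).
  { unfold cf. destruct (Nat.leb_spec k n); [|lia]. f_equal. f_equal. lia. }
  rewrite E0, E1, E2. simpl.
  replace (n - (n - S k))%nat with (S k) by lia.
  replace (n - S (n - S k))%nat with k by lia.
  field. lra.
Qed.

Lemma qnum0 z : qnum z (Z.of_nat 0) = 0.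
Proof. unfold qnum. simpl. unfold Rdiv. ring. Qed.

Lemma E_eq q s t1 t0 a b (c : nat -> R) (n k : nat) :
  let c1 := dq q c in let c2 := dq (/ q) c1 in
  s / 2 * (sr (sr c2) k - (a + b) * sr c2 k + a * b * c2 k) + t1 * sr c1 k + t0 * c1 k
    + lambda_n q t1 s n * c k
  = c k * (lambda_n q t1 s n - lambda_n q t1 s k) + c (S k) * bet q s t0 a b (S k)
    + c (S (S k)) * gam q s a b (S (S k)).
Proof.
  intros c1 c2. unfold c2, c1, dq, bet, gam, lambda_n, qn.
  destruct k as [|[|k]]; cbn [sr pred].
  - rewrite !qnum0. field.
  - rewrite Zsub1, !qnum0. field.
  - rewrite Zsub1. field.
Qed.

Lemma lin_ev s a b t1 t0 l (c0 c1 c2 : nat -> R) N x :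
  ev (fun k => s / 2 * (sr (sr c2) k - (a + b) * sr c2 k + a * b * c2 k) + t1 * sr c1 k + t0 * c1 k
    + l * c0 k) N x
  = s / 2 * (ev (sr (sr c2)) N x - (a + b) * ev (sr c2) N x + a * b * ev c2 N x)
    + t1 * ev (sr c1) N x + t0 * ev c1 N x + l * ev c0 N x.
Proof.
  induction N. unfold ev; simpl. field.
  rewrite !(ev_S _ N). rewrite IHN. field.
Qed.

Lemma op_ev s a b t1 t0 l (c0 c1 c2 : nat -> R) N x :
  c2 N = 0 -> sr c2 N = 0 -> c1 N = 0 ->
  s / 2 * (x - a) * (x - b) * ev c2 N x + (t1 * x + t0) * ev c1 N x + l * ev c0 N x
  = ev (fun k => s / 2 * (sr (sr c2) k - (a + b) * sr c2 k + a * b * c2 k) + t1 * sr c1 k + t0 * c1 k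
    + l * c0 k) N x.
Proof.
  intros H2 H2' H1. rewrite lin_ev.
  assert (A1 : x * ev c2 N x = ev (sr c2) N x).
  { rewrite ev_xmul, ev_pad; auto. }
  assert (A2 : x * ev (sr c2) N x = ev (sr (sr c2)) N x).
  { rewrite ev_xmul, ev_pad; auto. }
  assert (A3 : x * ev c1 N x = ev (sr c1) N x).
  { rewrite ev_xmul, ev_pad; auto. }
  rewrite <- A2, <- A1, <- A3. field.
Qed.

Lemma qD_ext z f g x : (forall t, f t = g t) -> qD z f x = qD z g x.
Proof.
  intro H. unfold qD. destruct (Req_EM_T x 0). apply Derive_ext; auto. rewrite !H. reflexivity.
Qed.

Lemma eht q s t1 t0 a b n x : 0 < q < 1 -> s <> 0 -> (1 - / q) * t1 = - (s / 2) ->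
  s / 2 * (x - a) * (x - b) * qD (/ q) (qD q (ev (cf q s t1 t0 a b n) n)) x
  + (t1 * x + t0) * qD q (ev (cf q s t1 t0 a b n) n) x
  + lambda_n q t1 s n * ev (cf q s t1 t0 a b n) n x = 0.
Proof.
  intros Hq hs h1.
  set (c := cf q s t1 t0 a b n).
  assert (Hq1 : q <> 1) by lra.
  assert (Hiq1 : / q <> 1).
  { assert (1 < / q) by (rewrite <- Rinv_1; apply Rinv_lt_contravar; lra). lra. }
  assert (Hc : forall k, (n < k)%nat -> c k = 0) by (intros; apply cf_gt; auto).
  assert (Hp : forall t, ev c n t = ev c (S (S n)) t).
  { intro t. rewrite !ev_pad; auto. }
  assert (Hd1 : forall t, qD q (ev c n) t = ev (dq q c) (S n) t).
  { intro t. rewrite (qD_ext _ _ _ _ Hp). apply qD_ev; auto. }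
  rewrite (qD_ext _ _ _ _ Hd1), Hd1, qD_ev by auto.
  rewrite Hp.
  rewrite <- (ev_pad (dq q c) (S n)) by (unfold dq; rewrite Hc; [ring|lia]).
  rewrite <- (ev_pad (dq (/ q) (dq q c)) n) by (unfold dq; rewrite Hc; [ring|lia]).
  rewrite <- (ev_pad (dq (/ q) (dq q c)) (S n)) by (unfold dq; rewrite Hc; [ring|lia]).
  rewrite op_ev.
  2: unfold dq; rewrite Hc; [ring|lia].
  2: simpl; unfold dq; rewrite Hc; [ring|lia].
  2: unfold dq; rewrite Hc; [ring|lia].
  apply ev_zero. intros k Hk. rewrite E_eq.
  destruct (Nat.lt_ge_cases k n) as [Hlt|Hge].
  - apply cf_rec; auto. intro He. apply lam_inj in He; auto. lia.
  - rewrite (Hc (S k)), (Hc (S (S k))) by lia.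
    destruct (Nat.eq_dec k n) as [->|Hne]. ring. rewrite Hc by lia. ring.
Qed.


Lemma lim_geo q c : 0 < q < 1 -> is_lim_seq (fun N => c * q ^ N) 0.
Proof.
  intro Hq. replace (Finite 0) with (Rbar_mult c 0) by (simpl; f_equal; ring).
  apply is_lim_seq_scal_l. apply is_lim_seq_geom. rewrite Rabs_right; lra.
Qed.

Lemma tel (W F : R -> R) (q y c Lw : R) : 0 < q < 1 -> y <> 0 -> c <> 0 ->
  (forall j, (1 - q) * y * (q ^ j * F (q ^ j * y)) * c = W (q ^ j * y) - W (q ^ S j * y)) ->
  is_lim_seq (fun N => W (q ^ N * y)) Lw ->
  is_series (fun j => q ^ j * F (q ^ j * y)) ((W y - Lw) / ((1 - q) * y * c)).
Proof.
  intros Hq Hy Hc HW HL.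
  apply is_series_Reals. apply (proj1 (is_lim_seq_Reals _ _)).
  assert (Hd : (1 - q) * y * c <> 0).
  { apply Rmult_integral_contrapositive; split; auto. apply Rmult_integral_contrapositive; split; auto. lra. }
  apply (is_lim_seq_ext (fun N => (W y - W (q ^ S N * y)) / ((1 - q) * y * c))).
  - intro N. induction N as [|N IHN].
    + simpl. specialize (HW 0%nat). simpl in HW. replace (1 * y) with y in * by ring.
      apply (Rmult_eq_reg_r ((1 - q) * y * c)); auto.
      replace (1 * F y * ((1 - q) * y * c)) with ((1 - q) * y * (1 * F y) * c) by ring.
      rewrite HW. field. repeat split; auto; lra.
    + simpl sum_f_R0. rewrite <- IHN. specialize (HW (S N)).
      apply (Rmult_eq_reg_r ((1 - q) * y * c)); auto.
      replace ((W y - W (q ^ S (S N) * y)) / ((1 - q) * y * c) * ((1 - q) * y * c))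
        with (W y - W (q ^ S N * y) + (W (q ^ S N * y) - W (q ^ S (S N) * y))) by (field; repeat split; auto; lra).
      rewrite <- HW. change (q * q ^ N) with (q ^ S N). field. repeat split; auto; lra.
  - apply (is_lim_seq_ext (fun N => (W y - W (q ^ S N * y)) * / ((1 - q) * y * c))).
    intro; reflexivity.
    replace (Finite ((W y - Lw) / ((1 - q) * y * c))) with (Finite ((W y - Lw) * / ((1 - q) * y * c))) by reflexivity.
    apply is_lim_seq_mult'. apply is_lim_seq_minus'. apply is_lim_seq_const.
    apply (is_lim_seq_incr_1 (fun N => W (q ^ N * y))). exact HL.
    apply is_lim_seq_const.
Qed.

Lemma W_id q s t1 t0 a b x F0 F1 F2 G0 G1 G2 r ln lm :
  0 < q < 1 -> a <> 0 -> b <> 0 -> x <> 0 ->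
  (1 - / q) * t1 = - (s / 2) -> (1 - / q) * t0 = s / 2 * (a + b) ->
  s / 2 * (x - a) * (x - b) * (((F1 - F0) / ((1 - q) * x) - (F2 - F1) / ((1 - q) * (/ q * x))) / ((1 - / q) * x))
   + (t1 * x + t0) * ((F1 - F0) / ((1 - q) * x)) + ln * F1 = 0 ->
  s / 2 * (x - a) * (x - b) * (((G1 - G0) / ((1 - q) * x) - (G2 - G1) / ((1 - q) * (/ q * x))) / ((1 - / q) * x))
   + (t1 * x + t0) * ((G1 - G0) / ((1 - q) * x)) + lm * G1 = 0 ->
  ((1 - x / a) * (1 - x / b) * r * ((F2 * G1 - F1 * G2) / x) - r * ((F1 * G0 - F0 * G1) / (q * x)))
    / ((1 - q) * x) * (q ^ 2 * s * a * b / (2 * (1 - q)))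
  = (lm - ln) * (F1 * G1 * r).
Proof.
  intros Hq ha hb hx h1 h0 Ef Eg.
  assert (Hq0 : q <> 0) by lra.
  assert (Hd : 1 - / q <> 0).
  { assert (1 < / q) by (rewrite <- Rinv_1; apply Rinv_lt_contravar; lra). lra. }
  assert (Ht1 : t1 = - (s / 2) / (1 - / q)) by
    (apply (Rmult_eq_reg_l (1 - / q)); [rewrite h1; field; split; [exact Hq0|lra] | exact Hd]).
  assert (Ht0 : t0 = s / 2 * (a + b) / (1 - / q)) by
    (apply (Rmult_eq_reg_l (1 - / q)); [rewrite h0; field; split; [exact Hq0|lra] | exact Hd]).
  set (LF := s / 2 * (x - a) * (x - b) * (((F1 - F0) / ((1 - q) * x) - (F2 - F1) / ((1 - q) * (/ q * x))) / ((1 - / q) * x))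
   + (t1 * x + t0) * ((F1 - F0) / ((1 - q) * x))) in Ef.
  set (LG := s / 2 * (x - a) * (x - b) * (((G1 - G0) / ((1 - q) * x) - (G2 - G1) / ((1 - q) * (/ q * x))) / ((1 - / q) * x))
   + (t1 * x + t0) * ((G1 - G0) / ((1 - q) * x))) in Eg.
  assert (K : ((1 - x / a) * (1 - x / b) * r * ((F2 * G1 - F1 * G2) / x) - r * ((F1 * G0 - F0 * G1) / (q * x)))
    / ((1 - q) * x) * (q ^ 2 * s * a * b / (2 * (1 - q))) = r * (LF * G1 - F1 * LG)).
  { unfold LF, LG. rewrite Ht1, Ht0. field. repeat split; auto; lra. }
  rewrite K. replace LF with (- ln * F1) by lra. replace LG with (- lm * G1) by lra. ring.
Qed.


Lemma sum_ge (u : nat -> R) j0 N : (forall k, 0 <= u k) -> (j0 <= N)%nat -> u j0 <= sum_f_R0 u N.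
Proof.
  intros H Hj. induction N.
  - replace j0 with 0%nat by lia. simpl. lra.
  - destruct (Nat.eq_dec j0 (S N)) as [->|Hne].
    + simpl. assert (0 <= sum_f_R0 u N).
      { clear -H. induction N; simpl. apply H. specialize (H (S N)). lra. }
      lra.
    + simpl. specialize (H (S N)). assert (u j0 <= sum_f_R0 u N) by (apply IHN; lia). lra.
Qed.

Lemma ser_ge (u : nat -> R) j0 : ex_series u -> (forall k, 0 <= u k) -> u j0 <= Series u.
Proof.
  intros He H. pose proof (Series_correct _ He) as Hs.
  apply is_series_Reals in Hs. apply (proj2 (is_lim_seq_Reals _ _)) in Hs.
  apply (is_lim_seq_incr_n _ j0) in Hs.
  assert (Rbar_le (u j0) (Series u)).
  { apply (is_lim_seq_le (fun _ => u j0) _ _ _ (fun n => sum_ge u j0 (n + j0) H ltac:(lia))).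
    apply is_lim_seq_const. exact Hs. }
  exact H0.
Qed.

Lemma ev_shift c n x : ev c (S n) x = c 0%nat + x * ev (fun k => c (S k)) n x.
Proof.
  induction n. unfold ev; simpl; ring.
  rewrite ev_S, IHn, (ev_S (fun k => c (S k))). simpl. ring.
Qed.

Lemma geo_y q y : 0 < q < 1 -> is_lim_seq (fun j => q ^ j * y) 0.
Proof.
  intro Hq. apply (is_lim_seq_ext (fun j => y * q ^ j)). intro; ring. apply lim_geo; auto.
Qed.

Lemma no_inf_zeros q y n : 0 < q < 1 -> y <> 0 -> forall c J, c n <> 0 ->
  (forall j, (J <= j)%nat -> ev c n (q ^ j * y) = 0) -> False.
Proof.
  intros Hq Hy. induction n; intros c J Hc HZ.
  - specialize (HZ J (le_n _)). unfold ev in HZ. simpl in HZ. apply Hc. lra.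
  - assert (H0 : c 0%nat = 0).
    { pose proof (ev_lim c (S n) _ (geo_y q y Hq)) as Hl.
      assert (Hl0 : is_lim_seq (fun j => ev c (S n) (q ^ j * y)) 0).
      { apply (is_lim_seq_ext_loc (fun _ => 0)). exists J. intros; symmetry; apply HZ; auto.
        apply is_lim_seq_const. }
      apply is_lim_seq_unique in Hl. apply is_lim_seq_unique in Hl0. rewrite Hl in Hl0.
      injection Hl0. auto. }
    apply (IHn (fun k => c (S k)) J Hc).
    intros j Hj. specialize (HZ j Hj). rewrite ev_shift, H0 in HZ.
    assert (q ^ j * y <> 0).
    { apply Rmult_integral_contrapositive; split; auto. apply pow_nonzero; lra. }
    rewrite Rplus_0_l in HZ.
    apply Rmult_integral in HZ. destruct HZ; [contradiction|auto].
Qed.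

Definition rhoF (q a b x : R) : R := qpoch_inf (q * x / a) q * qpoch_inf (q * x / b) q.

Lemma rho_shift q a b x : q <> 0 -> a <> 0 -> b <> 0 ->
  rhoF q a b (/ q * x) = (1 - x / a) * (1 - x / b) * rhoF q a b x.
Proof.
  intros. unfold rhoF.
  replace (q * (/ q * x) / a) with (x / a) by (field; auto).
  replace (q * (/ q * x) / b) with (x / b) by (field; auto).
  rewrite (Q_fe (x / a)), (Q_fe (x / b)).
  replace (x / a * q) with (q * x / a) by (field; auto).
  replace (x / b * q) with (q * x / b) by (field; auto). ring.
Qed.

Lemma rho_node q a b y j : 0 < q < 1 -> a <> 0 -> b <> 0 -> y / a <= 1 -> y / b <= 1 ->
  0 <= rhoF q a b (q ^ j * y) <= exp (Rabs (y / a) / (1 - q)) * exp (Rabs (y / b) / (1 - q)).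
Proof.
  intros Hq ha hb Hya Hyb. unfold rhoF.
  pose proof (pow_le_1 q (S j) ltac:(lra)) as Hp.
  assert (Hgen : forall K, K <= 1 -> 0 <= qpoch_inf (K * q ^ S j) q <= exp (Rabs K / (1 - q))).
  { intros K HK. assert (K * q ^ S j <= 1) by (destruct (Rle_dec K 0); nra).
    destruct (Q_conv _ q Hq H) as [_ [H0 Hb]]. split; auto.
    apply Rabs_le_between in Hb.
    assert (exp (Rabs (K * q ^ S j) / (1 - q)) <= exp (Rabs K / (1 - q))).
    { apply exp_le_m. unfold Rdiv. apply Rmult_le_compat_r. left; apply Rinv_0_lt_compat; lra.
      rewrite Rabs_mult, (Rabs_right (q ^ S j)) by lra. pose proof (Rabs_pos K). nra. }
    lra. }
  replace (q * (q ^ j * y) / a) with (y / a * q ^ S j) by (simpl; field; auto).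
  replace (q * (q ^ j * y) / b) with (y / b * q ^ S j) by (simpl; field; auto).
  destruct (Hgen _ Hya), (Hgen _ Hyb). split. apply Rmult_le_pos; auto.
  apply Rmult_le_compat; auto.
Qed.

Lemma rho_node_lim q a b y : 0 < q < 1 -> a <> 0 -> b <> 0 ->
  is_lim_seq (fun j => rhoF q a b (q ^ j * y)) 1.
Proof.
  intros Hq ha hb. unfold rhoF. replace (Finite 1) with (Finite (1 * 1)) by (f_equal; ring).
  apply is_lim_seq_mult'.
  - apply (is_lim_seq_ext (fun j => qpoch_inf ((q * y / a) * q ^ j) q)).
    intro; f_equal; field; auto. apply Q_cont; auto. apply lim_geo; auto.
  - apply (is_lim_seq_ext (fun j => qpoch_inf ((q * y / b) * q ^ j) q)).
    intro; f_equal; field; auto. apply Q_cont; auto. apply lim_geo; auto.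
Qed.

Lemma rho_shift_lim q a b y : 0 < q < 1 -> a <> 0 -> b <> 0 ->
  is_lim_seq (fun j => rhoF q a b (/ q * (q ^ j * y))) 1.
Proof.
  intros Hq ha hb. unfold rhoF. replace (Finite 1) with (Finite (1 * 1)) by (f_equal; ring).
  apply is_lim_seq_mult'.
  - apply (is_lim_seq_ext (fun j => qpoch_inf ((y / a) * q ^ j) q)).
    intro; f_equal; field; split; auto; lra. apply Q_cont; auto. apply lim_geo; auto.
  - apply (is_lim_seq_ext (fun j => qpoch_inf ((y / b) * q ^ j) q)).
    intro; f_equal; field; split; auto; lra. apply Q_cont; auto. apply lim_geo; auto.
Qed.


Lemma qD1u f x q : 0 < q < 1 -> x <> 0 -> qD q f x = (f x - f (q * x)) / ((1 - q) * x).
Proof. intros. unfold qD. destruct (Req_EM_T x 0); [contradiction|reflexivity]. Qed.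

Lemma qD2u f x q : 0 < q < 1 -> x <> 0 ->
  qD (/ q) (qD q f) x = ((f x - f (q * x)) / ((1 - q) * x) - (f (/ q * x) - f x) / ((1 - q) * (/ q * x))) / ((1 - / q) * x).
Proof.
  intros Hq Hx. unfold qD at 1. destruct (Req_EM_T x 0); [contradiction|].
  rewrite (qD1u f x q Hq Hx).
  assert (/ q * x <> 0) by (apply Rmult_integral_contrapositive; split; auto; apply Rinv_neq_0_compat; lra).
  rewrite (qD1u f (/ q * x) q Hq H).
  replace (q * (/ q * x)) with x by (field; lra). reflexivity.
Qed.

Definition Wf (q a b : R) (f g : R -> R) (x : R) : R :=
  rhoF q a b (/ q * x) * ((f (/ q * x) * g x - f x * g (/ q * x)) / x).

Lemma chain_step q s t1 t0 a b n m y j :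
  0 < q < 1 -> s <> 0 -> a <> 0 -> b <> 0 -> y <> 0 ->
  (1 - / q) * t1 = - (s / 2) -> (1 - / q) * t0 = s / 2 * (a + b) ->
  let f := ev (cf q s t1 t0 a b n) n in let g := ev (cf q s t1 t0 a b m) m in
  (1 - q) * y * (q ^ j * (f (q ^ j * y) * g (q ^ j * y) * rhoF q a b (q ^ j * y)))
    * ((lambda_n q t1 s m - lambda_n q t1 s n) / (q ^ 2 * s * a * b / (2 * (1 - q))))
  = Wf q a b f g (q ^ j * y) - Wf q a b f g (q ^ S j * y).
Proof.
  intros Hq hs ha hb hy h1 h0 f g.
  assert (Hx : q ^ j * y <> 0) by (apply Rmult_integral_contrapositive; split; auto; apply pow_nonzero; lra).
  set (x := q ^ j * y) in *.
  replace (q ^ S j * y) with (q * x) by (unfold x; simpl; ring).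
  assert (Ef := eht q s t1 t0 a b n x Hq hs h1).
  assert (Eg := eht q s t1 t0 a b m x Hq hs h1).
  fold f in Ef. fold g in Eg.
  rewrite qD2u, qD1u in Ef, Eg by auto.
  pose proof (W_id q s t1 t0 a b x (f (q * x)) (f x) (f (/ q * x)) (g (q * x)) (g x) (g (/ q * x))
     (rhoF q a b x) (lambda_n q t1 s n) (lambda_n q t1 s m) Hq ha hb Hx h1 h0 Ef Eg) as HW.
  unfold Wf. replace (/ q * (q * x)) with x by (field; lra).
  rewrite rho_shift by (auto; lra).
  assert (HK : q ^ 2 * s * a * b / (2 * (1 - q)) <> 0).
  { assert (q ^ 2 <> 0) by (apply pow_nonzero; lra).
    unfold Rdiv. apply Rmult_integral_contrapositive; split.
    repeat (apply Rmult_integral_contrapositive; split; auto).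
    apply Rinv_neq_0_compat. apply Rmult_integral_contrapositive; split; lra. }
  transitivity ((lambda_n q t1 s m - lambda_n q t1 s n) * (f x * g x * rhoF q a b x) * ((1 - q) * x)
     / (q ^ 2 * s * a * b / (2 * (1 - q)))).
  { unfold x. field. repeat split; auto; try lra; try (apply pow_nonzero; lra). }
  rewrite <- HW. field. repeat split; auto; try lra; try (apply pow_nonzero; lra).
Qed.

Lemma W_lim q a b c d n m y : 0 < q < 1 -> a <> 0 -> b <> 0 -> c (S n) = 0 -> d (S m) = 0 -> y <> 0 ->
  is_lim_seq (fun N => Wf q a b (ev c n) (ev d m) (q ^ N * y))
    (1 * ((1 - q) / q * (dq q c 0%nat * d 0%nat - c 0%nat * dq q d 0%nat))).
Proof.
  intros Hq ha hb Hc Hd hy.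
  assert (Hq1 : q <> 1) by lra.
  assert (Hu : is_lim_seq (fun N => / q * (q ^ N * y)) 0).
  { apply (is_lim_seq_ext (fun N => (/ q * y) * q ^ N)). intro; ring. apply lim_geo; auto. }
  apply (is_lim_seq_ext (fun N => rhoF q a b (/ q * (q ^ N * y)) *
     ((1 - q) / q * (ev (dq q c) n (/ q * (q ^ N * y)) * ev d m (q ^ N * y)
        - ev c n (q ^ N * y) * ev (dq q d) m (/ q * (q ^ N * y)))))).
  - intro N. unfold Wf. f_equal.
    assert (Hx : q ^ N * y <> 0) by (apply Rmult_integral_contrapositive; split; auto; apply pow_nonzero; lra).
    set (x := q ^ N * y) in *.
    pose proof (ev_dq q c n (/ q * x) Hq1) as E1.
    pose proof (ev_dq q d m (/ q * x) Hq1) as E2.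
    rewrite !ev_pad in E1, E2 by auto.
    replace (q * (/ q * x)) with x in E1, E2 by (field; lra).
    replace (ev c n (/ q * x)) with (ev c n x + (1 - q) * (/ q * x) * ev (dq q c) n (/ q * x)) by lra.
    replace (ev d m (/ q * x)) with (ev d m x + (1 - q) * (/ q * x) * ev (dq q d) m (/ q * x)) by lra.
    field. split; auto; lra.
  - apply is_lim_seq_mult'. apply rho_shift_lim; auto.
    apply is_lim_seq_mult'. apply is_lim_seq_const.
    apply is_lim_seq_minus'; apply is_lim_seq_mult'.
    + apply ev_lim; auto.
    + apply ev_lim. apply geo_y; auto.
    + apply ev_lim. apply geo_y; auto.
    + apply ev_lim; auto.
Qed.

Lemma W_zero q a b f g y : 0 < q < 1 -> a <> 0 -> b <> 0 -> (y = a \/ y = b) -> Wf q a b f g y = 0.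
Proof.
  intros Hq ha hb Hy. unfold Wf. rewrite rho_shift by (auto; lra).
  destruct Hy as [->| ->].
  - replace (a / a) with 1 by (field; auto). ring.
  - replace (b / b) with 1 by (field; auto). ring.
Qed.

Lemma chain_int q a b c d n m y : 0 < q < 1 -> a <> 0 -> b <> 0 -> y / a <= 1 -> y / b <= 1 ->
  ex_series (fun j => q ^ j * (ev c n (q ^ j * y) * ev d m (q ^ j * y) * rhoF q a b (q ^ j * y))).
Proof.
  intros Hq ha hb Hya Hyb.
  set (B := exp (Rabs (y / a) / (1 - q)) * exp (Rabs (y / b) / (1 - q))).
  set (Mf := ev (fun k => Rabs (c k)) n (Rabs y)).
  set (Mg := ev (fun k => Rabs (d k)) m (Rabs y)).
  apply (@ex_series_le R_AbsRing R_CompleteNormedModule _ (fun j => (Mf * Mg * B) * q ^ j)).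
  - intro j. change (norm ?z) with (Rabs z).
    assert (Hx : Rabs (q ^ j * y) <= Rabs y).
    { rewrite Rabs_mult, (Rabs_right (q ^ j)). pose proof (pow_le_1 q j ltac:(lra)).
      pose proof (Rabs_pos y). nra. apply Rle_ge, pow_le; lra. }
    pose proof (ev_bound c n _ _ Hx) as Bf. pose proof (ev_bound d m _ _ Hx) as Bg.
    fold Mf in Bf. fold Mg in Bg.
    destruct (rho_node q a b y j Hq ha hb Hya Hyb) as [R0 R1]. fold B in R1.
    rewrite !Rabs_mult, (Rabs_right (q ^ j)) by (apply Rle_ge, pow_le; lra).
    rewrite (Rabs_right (rhoF _ _ _ _)) by lra.
    assert (0 <= q ^ j) by (apply pow_le; lra).
    assert (Rabs (ev c n (q ^ j * y)) * Rabs (ev d m (q ^ j * y)) <= Mf * Mg).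
    { apply Rmult_le_compat; auto using Rabs_pos. }
    assert (Rabs (ev c n (q ^ j * y)) * Rabs (ev d m (q ^ j * y)) * rhoF q a b (q ^ j * y) <= Mf * Mg * B).
    { apply Rmult_le_compat; auto. apply Rmult_le_pos; apply Rabs_pos. }
    nra.
  - apply (ex_series_ext (fun j => scal (Mf * Mg * B) (q ^ j))). intro; reflexivity.
    apply (@ex_series_scal_l R_AbsRing R_NormedModule). apply ex_series_geom. rewrite Rabs_right; lra.
Qed.


Lemma nonneg_node q a b c n y j : 0 < q < 1 -> a <> 0 -> b <> 0 -> y / a <= 1 -> y / b <= 1 ->
  0 <= q ^ j * (ev c n (q ^ j * y) * ev c n (q ^ j * y) * rhoF q a b (q ^ j * y)).
Proof.
  intros. destruct (rho_node q a b y j) as [H4 _]; auto.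
  apply Rmult_le_pos. apply pow_le; lra. apply Rmult_le_pos; auto. apply Rle_0_sqr.
Qed.

Lemma ratios a b : a < 0 -> 0 < b -> a / a <= 1 /\ a / b <= 1 /\ b / a <= 1 /\ b / b <= 1.
Proof.
  intros ha hb. assert (/ a < 0) by (apply Rinv_lt_0_compat; lra).
  assert (0 < / b) by (apply Rinv_0_lt_compat; lra).
  unfold Rdiv. rewrite !Rinv_r by lra. repeat split; try lra; nra.
Qed.

Lemma qint_pos q a b c n : 0 < q < 1 -> a < 0 -> 0 < b -> c n <> 0 ->
  0 < qint q a b (fun x => ev c n x * ev c n x * rhoF q a b x).
Proof.
  intros Hq ha hb Hc. unfold qint. cbv beta.
  assert (ha' : a <> 0) by lra. assert (hb' : b <> 0) by lra.
  destruct (ratios a b ha hb) as [Raa [Rab [Rba Rbb]]].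
  set (ua := fun j => q ^ j * (ev c n (q ^ j * a) * ev c n (q ^ j * a) * rhoF q a b (q ^ j * a))).
  set (ub := fun j => q ^ j * (ev c n (q ^ j * b) * ev c n (q ^ j * b) * rhoF q a b (q ^ j * b))).
  assert (Ea : ex_series ua) by (apply chain_int; auto).
  assert (Eb : ex_series ub) by (apply chain_int; auto).
  assert (Pa : forall j, 0 <= ua j) by (intro; apply nonneg_node; auto).
  assert (Pb : forall j, 0 <= ub j) by (intro; apply nonneg_node; auto).
  assert (Sa : 0 <= Series ua) by (eapply Rle_trans; [apply (Pa 0%nat)|apply ser_ge; auto]).
  pose proof (rho_node_lim q a b b Hq ha' hb') as Hl.
  apply is_lim_seq_spec in Hl. destruct (Hl (mkposreal (/ 2) ltac:(lra))) as [J HJ].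
  assert (Hex : exists j, (J <= j)%nat /\ ev c n (q ^ j * b) <> 0).
  { destruct (classic (exists j, (J <= j)%nat /\ ev c n (q ^ j * b) <> 0)) as [H|H]; auto.
    exfalso. apply (no_inf_zeros q b n Hq hb' c J Hc).
    intros j Hj. destruct (Req_EM_T (ev c n (q ^ j * b)) 0) as [E|E]; auto.
    exfalso; apply H; exists j; auto. }
  destruct Hex as [j0 [Hj0 Hne]].
  specialize (HJ j0 Hj0). simpl in HJ. apply Rabs_lt_between in HJ.
  assert (Hu : 0 < ub j0).
  { unfold ub. apply Rmult_lt_0_compat. apply pow_lt; lra.
    apply Rmult_lt_0_compat; [|lra]. 
    assert (0 < ev c n (q ^ j0 * b) * ev c n (q ^ j0 * b)) by (apply Rsqr_pos_lt; auto). lra. }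
  assert (Sb : 0 < Series ub) by (eapply Rlt_le_trans; [apply Hu|apply ser_ge; auto]).
  fold ua ub.
  assert (0 < (1 - q) * b) by (apply Rmult_lt_0_compat; lra).
  assert (0 <= (1 - q) * - a) by (apply Rmult_le_pos; lra).
  assert (0 < (1 - q) * b * Series ub) by (apply Rmult_lt_0_compat; auto).
  assert (0 <= (1 - q) * - a * Series ua) by (apply Rmult_le_pos; auto).
  lra.
Qed.

Lemma qint_orth q s t1 t0 a b n m : 0 < q < 1 -> s <> 0 -> a < 0 -> 0 < b ->
  (1 - / q) * t1 = - (s / 2) -> (1 - / q) * t0 = s / 2 * (a + b) -> m <> n ->
  qint q a b (fun x => ev (cf q s t1 t0 a b n) n x * ev (cf q s t1 t0 a b m) m x * rhoF q a b x) = 0.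
Proof.
  intros Hq hs ha hb h1 h0 Hmn.
  assert (ha' : a <> 0) by lra. assert (hb' : b <> 0) by lra.
  set (f := ev (cf q s t1 t0 a b n) n). set (g := ev (cf q s t1 t0 a b m) m).
  set (K := q ^ 2 * s * a * b / (2 * (1 - q))).
  set (cc := (lambda_n q t1 s m - lambda_n q t1 s n) / K).
  assert (HK : K <> 0).
  { unfold K. assert (q ^ 2 <> 0) by (apply pow_nonzero; lra).
    unfold Rdiv. apply Rmult_integral_contrapositive; split.
    repeat (apply Rmult_integral_contrapositive; split; auto).
    apply Rinv_neq_0_compat. apply Rmult_integral_contrapositive; split; lra. }
  assert (Hcc : cc <> 0).
  { unfold cc, Rdiv. apply Rmult_integral_contrapositive; split; [|apply Rinv_neq_0_compat; auto].
    intro E. apply Hmn. apply (lam_inj q s t1); auto. lra. }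
  set (Lw := 1 * ((1 - q) / q * (dq q (cf q s t1 t0 a b n) 0%nat * cf q s t1 t0 a b m 0%nat
                 - cf q s t1 t0 a b n 0%nat * dq q (cf q s t1 t0 a b m) 0%nat))).
  assert (Hs : forall y, y <> 0 -> (y = a \/ y = b) ->
     Series (fun j => q ^ j * (f (q ^ j * y) * g (q ^ j * y) * rhoF q a b (q ^ j * y)))
     = (0 - Lw) / ((1 - q) * y * cc)).
  { intros y Hy Hyab. apply is_series_unique.
    rewrite <- (W_zero q a b f g y Hq ha' hb' Hyab).
    apply (tel (Wf q a b f g) (fun x => f x * g x * rhoF q a b x)); auto.
    - intro j. apply chain_step; auto.
    - apply W_lim; auto; apply cf_gt; lia. }
  unfold qint. cbv beta. fold f g.
  rewrite (Hs a ha' (or_introl eq_refl)), (Hs b hb' (or_intror eq_refl)).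
  field. repeat split; auto; lra.
Qed.

Theorem theorem5p12 (q s t1 t0 a b : R)
  (hq0 : 0 < q) (hq1 : q < 1)
  (hs : s <> 0) (ht1 : t1 <> 0)
  (ha : a < 0) (hb : 0 < b)
  (h1 : (1 - / q) * t1 = - (s / 2))
  (h0 : (1 - / q) * t0 = s / 2 * (a + b)) :
  let sigma1 := fun x : R => s / 2 * (x - a) * (x - b) in
  let tau := fun x : R => t1 * x + t0 in
  let rho := fun x : R => qpoch_inf (q * x / a) q * qpoch_inf (q * x / b) q in
  exists (P : nat -> R -> R) (d2 : nat -> R),
    (forall n : nat,
        is_poly_deg (P n) n /\
        solves_qEHT q sigma1 tau (lambda_n q t1 s n) (P n) /\
        d2 n <> 0) /\
    (forall m n : nat,
        qintegrable q a b (fun x => P n x * P m x * rho x) /\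
        qint q a b (fun x => P n x * P m x * rho x) = (if Nat.eqb m n then d2 n else 0)).
Proof.
  intros sigma1 tau rho.
  assert (Hq : 0 < q < 1) by lra.
  assert (ha' : a <> 0) by lra. assert (hb' : b <> 0) by lra.
  replace rho with (rhoF q a b) by reflexivity.
  exists (fun n => ev (cf q s t1 t0 a b n) n).
  exists (fun n => qint q a b (fun x => ev (cf q s t1 t0 a b n) n x * ev (cf q s t1 t0 a b n) n x * rhoF q a b x)).
  split.
  - intro n. split; [|split].
    + exists (cf q s t1 t0 a b n). split. rewrite cf_n; lra. intro; reflexivity.
    + intro x. unfold sigma1, tau. apply eht; auto.
    + apply Rgt_not_eq. apply qint_pos; auto. rewrite cf_n; lra.
  - intros m n. destruct (ratios a b ha hb) as [Raa [Rab [Rba Rbb]]]. split.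
    + split; apply chain_int; auto.
    + destruct (Nat.eqb_spec m n) as [->|Hmn]. reflexivity.
      apply qint_orth; auto.
Qed.
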